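(* For every $f\in F_0(G)$, conditional on $f_0=f$, for every $n\in\mathbb Z_+$ the inter-jump time $\xi_n$ of the interacting particle system is stochastically larger than an exponential random variable with rate $(n-1)Md+\|f\|_1$, i.e. $P_f(\xi_n>t)\ge e^{-((n-1)Md+\|f\|_1)t}$ for all $t\ge0$.
   Context: A graph is a quadruple $G=(V,E,K,m)$: $V$ is a finite or countable set of nodes, which are elements of a real Hilbert space $\mathcal H$ with inner product ''$\cdot$'' and norm $|\cdot|$; $E$ is a set of undirected edges (at most one edge between any two distinct nodes, no self-loops); the edge between $x$ and $y$ is written $\langle x,y\rangle=\langle y,x\rangle$, and $y\sim x$ means this edge exists; $K=(k_{xy})_{x,y\in V}$ with $k_{xy}=k_{yx}\ge0$ and $k_{xy}=0$ if there is no edge; $m=(m_x)_{x\in V}$ with $m_x>0$. Let $e_{xy}=(y-x)/|y-x|$. Assume $d_0=\sup_{x\in V}\#\{y:y\sim x\}<\infty$, set $d=\max\{d_0,2\}$, and assume $M=\max\{\sup_{x\in V}m_x^{-1},\sup_{\langle x,y\rangle\in E}k_{xy}\}<\infty$. $V=V_0\cup V_1$ is a fixed partition into disjoint sets. $F(G)$ is the set of functions $f$ assigning a real number $f(x)$ to each $x\in V$ and a vector $f(\langle x,y\rangle)\in\mathcal H$ that is a real multiple of $y-x$ to each edge. For $1\le\alpha<\infty$, $\|f\|_\alpha=\big(\sum_{x\in V}|f(x)|^\alpha/m_x+\sum_{\langle x,y\rangle\in E}k_{xy}|f(\langle x,y\rangle)|^\alpha\big)^{1/\alpha}$, and $\|f\|_\infty=\max\{\sup_x|f(x)|,\sup_{\langle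 x,y\rangle}|f(\langle x,y\rangle)|\}$. $F_0(G)$ is the set of $f\in F(G)$ with finitely many nonzero values such that $|f(x)|\in\mathbb Z$ and $|f(\langle x,y\rangle)|\in\mathbb Z$ for all nodes and edges. The interacting particle system (IPS) $(f_t)_{t\ge0}$ is the continuous-time Markov jump process on $F_0(G)$ with the following transitions from state $f$: (i) for each $x\in V$, at rate $|f(x)|/m_x$, for every $y\sim x$ the edge value $f(\langle x,y\rangle)$ is replaced by $f(\langle x,y\rangle)+\mathrm{sgn}(f(x))\,e_{yx}$ (all other values unchanged); (ii) for each edge $\langle x,y\rangle$, at rate $k_{xy}|f(\langle x,y\rangle)|$, with $s=\mathrm{sgn}(f(\langle x,y\rangle)\cdot e_{xy})$, the value $f(x)$ is replaced by $f(x)+s$ if $x\in V_0$ and $f(y)$ by $f(y)-s$ if $y\in V_0$ (values at nodes of $V_1$ never change; this rule is symmetric in $x,y$). $P_f,\mathbb E_f$ denote probability and expectation given $f_0=f$. $\tau_0=0$, $\tau_n$ is the time of the $n$-th jump, $\xi_n=\tau_n-\tau_{n-1}$, $h_n=f_{\tau_n}$, and $\eta_t=\sup\{n:\tau_n\le t\}$. *)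

(* Defs.v *)
From Stdlib Require Import Reals Lra ZArith List Classical ClassicalEpsilon.
Open Scope R_scope.

Set Implicit Arguments.

Definition cdec (P : Prop) : {P} + {~ P} := excluded_middle_informative P.

Definition finsupp {T : Type} (g : T -> Z) : Prop :=
  exists l : list T, NoDup l /\ forall x, In x l <-> g x <> 0%Z.

(* A duplicate-free list enumerating exactly the support (chosen by
   classical choice; empty list if the support is not finite). *)
Definition supp {T : Type} (g : T -> Z) : list T :=
  match cdec (finsupp g) with
  | left H => proj1_sig (constructive_indefinite_description _ H)
  | right _ => nil
  end.

Definition rsum {T : Type} (l : list T) (F : T -> R) : R :=
  fold_right Rplus 0 (map F l).

Section Graph.
(* V = nodes, E = (undirected) edges; [ends e = (x,y)] fixes a
   reference orientation of the edge <x,y>; the Hilbert-space vector value of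
   a function on the edge is encoded by its (integer, for F_0) coefficient c
   along the unit vector e_xy = (y-x)/|y-x|, i.e. f(<x,y>) = c * e_xy. *)
Variables (V E : Type) (ends : E -> V * V) (m : V -> R) (k : E -> R)
          (V0 : V -> Prop).

Definition state : Type := ((V -> Z) * (E -> Z))%type.

Definition in_F0 (f : state) : Prop := finsupp (fst f) /\ finsupp (snd f).

Definition norm1 (f : state) : R :=
  rsum (supp (fst f)) (fun x => IZR (Z.abs (fst f x)) / m x)
  + rsum (supp (snd f)) (fun e => k e * IZR (Z.abs (snd f e))).

(* The Poisson clocks of the IPS: one per node (rule (i)) and one per edge
   (rule (ii)); only clocks with possibly nonzero rate are listed. *)
Inductive clock : Type := NodeClock (x : V) | EdgeClock (e : E).

Definition clocks (f : state) : list clock :=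
  map NodeClock (supp (fst f)) ++ map EdgeClock (supp (snd f)).

Definition rate (f : state) (c : clock) : R :=
  match c with
  | NodeClock x => IZR (Z.abs (fst f x)) / m x
  | EdgeClock e => k e * IZR (Z.abs (snd f e))
  end.

Definition outcome (f : state) (c : clock) : state :=
  match c with
  | NodeClock x =>
      (* rule (i): f(<x,y>) += sgn(f(x)) e_yx for every y ~ x *)
      (fst f,
       fun e => if cdec (fst (ends e) = x) then (snd f e - Z.sgn (fst f x))%Z
                else if cdec (snd (ends e) = x) then (snd f e + Z.sgn (fst f x))%Z
                else snd f e)
  | EdgeClock e =>
      (* rule (ii), with (x,y) = ends e and s = sgn(f(<x,y>) . e_xy) *)
      let s := Z.sgn (snd f e) in
      (fun z => if cdec (z = fst (ends e)) then
                  (if cdec (V0 z) then (fst f z + s)%Z else fst f z)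
                else if cdec (z = snd (ends e)) then
                  (if cdec (V0 z) then (fst f z - s)%Z else fst f z)
                else fst f z,
       snd f)
  end.

Definition same_state (f g : state) : Prop :=
  (forall x, fst f x = fst g x) /\ (forall e, snd f e = snd g e).

Definition jump_clocks (f : state) : list clock :=
  filter (fun c => if cdec (same_state (outcome f c) f) then false else true)
         (clocks f).

Definition qrate (f : state) : R := rsum (jump_clocks f) (rate f).

(* jump_exp j f phi = E_f[ phi(h_j) ], where (h_j) is the embedded jump chain
   (a state with q = 0 is absorbing: h stays there forever). *)
Fixpoint jump_exp (j : nat) (f : state) (phi : state -> R) : R :=
  match j with
  | O => phi f
  | S j' =>
      if cdec (qrate f = 0) then phi f
      else rsum (jump_clocks f)
             (fun c => rate f c / qrate f * jump_exp j' (outcome f c) phi)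
  end.

(* P_f(xi_n > t) for n >= 1: given the jump chain, the holding time
   xi_n = tau_n - tau_(n-1) is exponential with rate q(h_(n-1))
   (xi_n = +infinity if q(h_(n-1)) = 0), hence
   P_f(xi_n > t) = E_f[ exp(-q(h_(n-1)) t) ]. *)
Definition xi_survival (n : nat) (f : state) (t : R) : R :=
  jump_exp (n - 1) f (fun g => exp (- (qrate g * t))).

End Graph.

(* Main.v *)
Require Import Defs.
From Stdlib Require Import Reals ZArith List Lia Lra Permutation Classical ClassicalEpsilon.
Open Scope R_scope.

Lemma exp_mono x y : x <= y -> exp x <= exp y.
Proof. intros [H|H]. left; now apply exp_increasing. subst; lra. Qed.

Section RS.
Context {T : Type}.

Lemma rsum_nil (F : T -> R) : rsum nil F = 0. Proof. reflexivity. Qed.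
Lemma rsum_cons x l (F : T -> R) : rsum (x :: l) F = F x + rsum l F.
Proof. reflexivity. Qed.

Lemma rsum_app l1 l2 (F : T -> R) : rsum (l1 ++ l2) F = rsum l1 F + rsum l2 F.
Proof. induction l1; simpl; rewrite ?rsum_cons, ?rsum_nil; [lra|].
  change (rsum (a :: l1 ++ l2) F) with (F a + rsum (l1 ++ l2) F). rewrite IHl1. lra. Qed.

Lemma rsum_le l (F G : T -> R) : (forall x, In x l -> F x <= G x) -> rsum l F <= rsum l G.
Proof. induction l; intros H; rewrite ?rsum_cons, ?rsum_nil; [lra|].
  assert (F a <= G a) by (apply H; simpl; auto).
  assert (rsum l F <= rsum l G) by (apply IHl; intros; apply H; simpl; auto). lra. Qed.

Lemma rsum_ext l (F G : T -> R) : (forall x, In x l -> F x = G x) -> rsum l F = rsum l G.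
Proof. intros H; apply Rle_antisym; apply rsum_le; intros x Hx; rewrite H; auto; lra. Qed.

Lemma rsum_plus l (F G : T -> R) : rsum l (fun x => F x + G x) = rsum l F + rsum l G.
Proof. induction l; rewrite ?rsum_cons, ?rsum_nil; [lra|]. rewrite IHl; lra. Qed.

Lemma rsum_scal l a (F : T -> R) : rsum l (fun x => a * F x) = a * rsum l F.
Proof. induction l; rewrite ?rsum_cons, ?rsum_nil; [lra|]. rewrite IHl; lra. Qed.

Lemma rsum_nonneg l (F : T -> R) : (forall x, 0 <= F x) -> 0 <= rsum l F.
Proof. intros H; induction l; rewrite ?rsum_cons, ?rsum_nil; [lra|]. specialize (H a); lra. Qed.

Lemma rsum_filter_le l (F : T -> R) (p : T -> bool) : (forall x, 0 <= F x) ->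
  rsum (filter p l) F <= rsum l F.
Proof. intros H; induction l; simpl; [lra|]. destruct (p a); rewrite ?rsum_cons.
  lra. specialize (H a); lra. Qed.

Lemma rsum_const_le l (F : T -> R) M : (forall x, F x <= M) -> rsum l F <= INR (length l) * M.
Proof. intros H; induction l; rewrite ?rsum_cons, ?rsum_nil; simpl length; [simpl; lra|].
  rewrite S_INR. specialize (H a); lra. Qed.

Lemma rsum_perm l1 l2 (F : T -> R) : Permutation l1 l2 -> rsum l1 F = rsum l2 F.
Proof. induction 1; rewrite ?rsum_cons; try lra. Qed.

Definition nzb (F : T -> R) x : bool := if cdec (F x = 0) then false else true.

Lemma rsum_filter_nz l (F : T -> R) : rsum l F = rsum (filter (nzb F) l) F.
Proof. induction l; simpl; [reflexivity|]. unfold nzb at 1. destruct (cdec (F a = 0)).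
  rewrite rsum_cons, e, IHl; lra. rewrite !rsum_cons, IHl; lra. Qed.

Lemma rsum_cover l1 l2 (F : T -> R) : NoDup l1 -> NoDup l2 ->
  (forall x, F x <> 0 -> In x l1) -> (forall x, F x <> 0 -> In x l2) ->
  rsum l1 F = rsum l2 F.
Proof. intros N1 N2 C1 C2. rewrite (rsum_filter_nz l1), (rsum_filter_nz l2).
  apply rsum_perm, NoDup_Permutation; try apply NoDup_filter; auto.
  intros x; rewrite !filter_In; unfold nzb; destruct (cdec (F x = 0)); intuition. Qed.

End RS.
Section SP.
Context {T : Type}.

Lemma supp_spec (g : T -> Z) : finsupp g -> NoDup (supp g) /\ forall x, In x (supp g) <-> g x <> 0%Z.
Proof. intros H. unfold supp. destruct (cdec (finsupp g)) as [H'|H']; [|tauto].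
  destruct (constructive_indefinite_description _ H') as [l Hl]; simpl; exact Hl. Qed.

Definition teq : forall x y : T, {x = y} + {x <> y} := fun x y => cdec (x = y).

Lemma change_bound (g g' : T -> Z) (c : T -> R) (L : list T) (M : R) :
 finsupp g -> NoDup L -> (forall x, 0 <= c x <= M) ->
 (forall x, ~ In x L -> g' x = g x) ->
 (forall x, (Z.abs (g' x) <= Z.abs (g x) + 1)%Z) ->
 finsupp g' /\ rsum (supp g') (fun x => c x * IZR (Z.abs (g' x)))
   <= rsum (supp g) (fun x => c x * IZR (Z.abs (g x))) + INR (length L) * M.
Proof.
  intros Hg HL Hc Hout Hab.
  destruct (supp_spec g Hg) as [Nd Sp].
  set (l0 := nodup teq (supp g ++ L)).
  assert (Hl0 : forall x, g' x <> 0%Z -> In x l0).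
  { intros x Hx. unfold l0. rewrite nodup_In, in_app_iff.
    destruct (classic (In x L)); auto. left. apply Sp. rewrite <- Hout; auto. }
  assert (Nl0 : NoDup l0) by apply NoDup_nodup.
  assert (Hfs : finsupp g').
  { exists (filter (fun x => if cdec (g' x = 0%Z) then false else true) l0). split.
    - now apply NoDup_filter.
    - intros x; rewrite filter_In. destruct (cdec (g' x = 0%Z)); intuition; discriminate. }
  split; [exact Hfs|].
  destruct (supp_spec g' Hfs) as [Nd' Sp'].
  rewrite (rsum_cover (supp g') l0); auto.
  2:{ intros x Hx. apply Sp'. intros E; rewrite E in Hx; simpl in Hx; lra. }
  2:{ intros x Hx. apply Hl0. intros E; rewrite E in Hx; simpl in Hx; lra. }
  set (w := fun x => if cdec (In x L) then c x else 0).
  apply Rle_trans with (rsum l0 (fun x => c x * IZR (Z.abs (g x)) + w x)).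
  { apply rsum_le. intros x _. unfold w. destruct (cdec (In x L)).
    - specialize (Hab x). apply IZR_le in Hab. rewrite plus_IZR in Hab.
      specialize (Hc x). nra.
    - rewrite Hout; auto. lra. }
  rewrite rsum_plus. apply Rplus_le_compat.
  - right. apply rsum_cover; auto.
    + intros x Hx. unfold l0. rewrite nodup_In, in_app_iff. left. apply Sp.
      intros E; rewrite E in Hx; simpl in Hx; lra.
    + intros x Hx. apply Sp. intros E; rewrite E in Hx; simpl in Hx; lra.
  - rewrite (rsum_cover l0 L w); auto.
    + apply Rle_trans with (rsum L c).
      * right; apply rsum_ext; intros x Hx; unfold w; destruct (cdec (In x L)); tauto.
      * apply rsum_const_le. intros x; apply Hc.
    + intros x Hx. unfold w in Hx. destruct (cdec (In x L)); [|lra].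
      unfold l0; rewrite nodup_In, in_app_iff; auto.
    + intros x Hx. unfold w in Hx. destruct (cdec (In x L)); [auto|lra].
Qed.
End SP.

Theorem lemma2p4
  (V E : Type) (ends : E -> V * V) (incident : V -> list E)
  (m : V -> R) (k : E -> R) (V0 : V -> Prop)
  (HVcount : exists enc : V -> nat, forall x y, enc x = enc y -> x = y)
  (Hloop : forall e, fst (ends e) <> snd (ends e))
  (Hsimple : forall e e', ends e = ends e' \/
                          ends e = (snd (ends e'), fst (ends e')) -> e = e')
  (Hinc : forall x e, In e (incident x) <-> (fst (ends e) = x \/ snd (ends e) = x))
  (Hincnd : forall x, NoDup (incident x))
  (Hk : forall e, 0 <= k e)
  (Hm : forall x, 0 < m x)
  (d0 : nat)
  (Hd0ub : forall x, (length (incident x) <= d0)%nat)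
  (Hd0lub : forall d', (forall x, (length (incident x) <= d')%nat) -> (d0 <= d')%nat)
  (M : R)
  (HMub : (forall x, / m x <= M) /\ (forall e, k e <= M))
  (HMlub : forall M', (forall x, / m x <= M') -> (forall e, k e <= M') -> M <= M')
  (f : state V E) (Hf : in_F0 f)
  (n : nat) (Hn : (1 <= n)%nat) (t : R) (Ht : 0 <= t) :
  xi_survival ends m k V0 n f t >=
  exp (- ((INR (n - 1) * M * INR (Nat.max d0 2) + norm1 m k f) * t)).
Proof.
  set (D := INR (Nat.max d0 2)).
  destruct HMub as [HMm HMk].
  assert (HM0 : 0 <= M).
  { destruct (classic (exists x : V, True)) as [[x _]|Hno].
    - specialize (HMm x). pose proof (Rinv_0_lt_compat _ (Hm x)). lra.
    - exfalso. assert (M <= M - 1); [|lra]. apply HMlub.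
      + intros x; exfalso; apply Hno; exists x; auto.
      + intros e; exfalso; apply Hno; exists (fst (ends e)); auto. }
  assert (HD : 2 <= D /\ forall x, INR (length (incident x)) <= D).
  { split; unfold D.
    - change 2 with (INR 2). apply le_INR. lia.
    - intros x; apply le_INR. specialize (Hd0ub x); lia. }
  assert (Hrate : forall g c, 0 <= rate m k g c).
  { intros g [x|e]; simpl.
    - unfold Rdiv. apply Rmult_le_pos. apply IZR_le; lia.
      left; apply Rinv_0_lt_compat; auto.
    - apply Rmult_le_pos; auto. apply IZR_le; lia. }
  assert (Hmap : forall (A : Type) (l : list A) (h : A -> clock V E) (F : clock V E -> R),
            rsum (map h l) F = rsum l (fun x => F (h x))).
  { intros; unfold rsum; rewrite map_map; reflexivity. }
  assert (Hq : forall g, 0 <= qrate ends m k V0 g <= norm1 m k g).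
  { intros g. unfold qrate, jump_clocks. split.
    - apply rsum_nonneg; auto.
    - eapply Rle_trans. apply rsum_filter_le; auto.
      unfold clocks; rewrite rsum_app, !Hmap. unfold norm1; simpl. lra. }
  assert (Hout : forall g c, in_F0 g -> in_F0 (outcome ends V0 g c) /\
             norm1 m k (outcome ends V0 g c) <= norm1 m k g + M * D).
  { intros g [x|e] [H1 H2]; simpl.
    - destruct (change_bound (snd g)
        (fun e => if cdec (fst (ends e) = x) then (snd g e - Z.sgn (fst g x))%Z
                else if cdec (snd (ends e) = x) then (snd g e + Z.sgn (fst g x))%Z
                else snd g e) k (incident x) M H2 (Hincnd x)) as [Hfs Hb].
      + intros e; split; auto.
      + intros e He. rewrite Hinc in He.
        destruct (cdec (fst (ends e) = x)); [tauto|].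
        destruct (cdec (snd (ends e) = x)); tauto.
      + intros e. destruct (cdec (fst (ends e) = x)); [lia|].
        destruct (cdec (snd (ends e) = x)); lia.
      + split; [split; auto|]. unfold norm1; simpl.
        pose proof (proj2 HD x). nra.
    - set (a := fst (ends e)). set (b := snd (ends e)).
      destruct (change_bound (fst g)
        (fun z => if cdec (z = a) then
                  (if cdec (V0 z) then (fst g z + Z.sgn (snd g e))%Z else fst g z)
                else if cdec (z = b) then
                  (if cdec (V0 z) then (fst g z - Z.sgn (snd g e))%Z else fst g z)
                else fst g z) (fun x => / m x) (a :: b :: nil) M H1) as [Hfs Hb].
      + constructor. simpl. intros [Hab|[]]. apply (Hloop e); auto.
        constructor. simpl; tauto. constructor.
      + intros z; split; auto. left; apply Rinv_0_lt_compat; auto.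
      + intros z Hz. simpl in Hz.
        destruct (cdec (z = a)); [subst; tauto|].
        destruct (cdec (z = b)); [subst; tauto|]. reflexivity.
      + intros z. destruct (cdec (z = a)); [destruct (cdec (V0 z)); lia|].
        destruct (cdec (z = b)); [destruct (cdec (V0 z)); lia|]. lia.
      + split; [split; auto|]. unfold norm1; simpl.
        rewrite (rsum_ext (supp (fst g)) (fun x => IZR (Z.abs (fst g x)) / m x)
                  (fun x => / m x * IZR (Z.abs (fst g x)))).
        2:{ intros; unfold Rdiv; ring. }
        match goal with |- rsum (supp ?G) _ + _ <= _ =>
          rewrite (rsum_ext (supp G) (fun x => IZR (Z.abs (G x)) / m x)
                  (fun x => / m x * IZR (Z.abs (G x)))) end.
        2:{ intros; unfold Rdiv; ring. }
        simpl length in Hb. replace (INR 2) with 2 in Hb by (simpl; ring).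
        pose proof (proj1 HD). nra. }
  set (phi := fun g : state V E => exp (- (qrate ends m k V0 g * t))).
  assert (IH : forall j g B, in_F0 g -> norm1 m k g <= B ->
            jump_exp ends m k V0 j g phi >= exp (-((INR j * M * D + B) * t))).
  { assert (HMD : forall j, 0 <= INR j * M * D).
    { intros j. apply Rmult_le_pos. apply Rmult_le_pos; auto. apply pos_INR.
      pose proof (proj1 HD); lra. }
    induction j as [|j IHj]; intros g B Hg HB.
    - simpl jump_exp. unfold phi. apply Rle_ge, exp_mono.
      pose proof (Hq g). specialize (HMD 0%nat). nra.
    - simpl jump_exp. destruct (cdec (qrate ends m k V0 g = 0)) as [H0|H0].
      + unfold phi. apply Rle_ge, exp_mono. pose proof (Hq g). specialize (HMD (S j)). nra.
      + set (q := qrate ends m k V0 g).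
        assert (Hqp : 0 < q) by (pose proof (Hq g); unfold q in *; lra).
        set (X := exp (- ((INR (S j) * M * D + B) * t))).
        apply Rle_ge. apply Rle_trans with (rsum (jump_clocks ends V0 g) (fun c => X / q * rate m k g c)).
        * rewrite rsum_scal. right. fold q. unfold qrate in q. unfold Rdiv.
          change (rsum (jump_clocks ends V0 g) (rate m k g)) with q. field. lra.
        * apply rsum_le. intros c _.
          destruct (Hout g c Hg) as [Hg' Hn'].
          specialize (IHj _ (B + M * D) Hg' ltac:(lra)).
          replace ((INR j * M * D + (B + M * D)) * t) with ((INR (S j) * M * D + B) * t) in IHj
            by (rewrite S_INR; ring).
          fold X in IHj. pose proof (Hrate g c). pose proof (Rinv_0_lt_compat _ Hqp).
          apply Rge_le in IHj. replace (X / q * rate m k g c) with (rate m k g c / q * X) by (unfold Rdiv; ring). apply Rmult_le_compat_l; auto. unfold Rdiv; apply Rmult_le_pos; lra. }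
  unfold xi_survival. apply IH; auto. lra.
Qed.
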